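(* A set $\mathcal{K}\subseteq\mathcal{T}(\mathbb{B}_{\mathrm{parse}})$ of trees is recognizable in the tree algebra $\mathbf{T}(\mathbb{B}_{\mathrm{parse}})$ if and only if it is recognizable in the parse-tree algebra $\mathbf{P}$.
   Context: Fix a countably infinite set $\mathbb{S}$ of source labels and a set $\mathbb{A}$ of edge labels; HR operations on graphs: $\mathbf{0}_\sigma$, $\mathbf{a}_{(s_1,\ldots)}$, $\mathsf{restrict}_\sigma$, $\mathsf{rename}_\alpha$, $\parallel$ (the last fuses equally labelled sources of a disjoint union). Trees: with root label $\mathfrak{r}$, trees over an alphabet $\mathbb{B}$ of unary/binary edge labels are the graphs that are values of ground terms over $\mathbf{c}$ for unary $c$ (root with a unary $c$-edge), $\mathsf{append}_b$ for binary $b$ (new root with a $b$-edge to the old root), $\parallel$ (fusing roots); $\mathbf{T}(\mathbb{B})$ is the single-sorted algebra with these operations on the set $\mathcal{T}(\mathbb{B})$ of such trees. $\mathbb{B}_{\mathrm{parse}}$ consists of unary labels $\underline{\mathbf{0}}_\sigma$, $\underline{\mathbf{a}}_{(s_1,\ldots)}$ and binary labels $\underline{\mathsf{restrict}}_\sigma$, $\underline{\mathsf{rename}}_\alpha$ (one per HR operation). $\mathbf{P}$ is the single-sorted algebra over the HR signature with universe $\mathcal{T}(\mathbb{B}_{\mathrm{parse}})$, interpreting the HR constants as the one-node trees with the corresponding unary label, $\mathsf{restrict}_\sigma$ as $\mathsf{append}_{\underline{\mathsf{restrict}}_\sigma}$, $\mathsf{rename}_\alpha$ as $\mathsf{append}_{\underline{\mathsf{rename}}_\alpha}$,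 and $\parallel$ as root fusion. A set is recognizable in an algebra if it is $h^{-1}(C)$ for some homomorphism $h$ into a finite algebra over the same signature and some set $C$. *)

(* Defs.v *)
From HB Require Import structures.
From mathcomp Require Import all_boot.
From mathcomp Require Import finmap.
From Stdlib Require Import Permutation.

Set Implicit Arguments.
Unset Strict Implicit.
Unset Printing Implicit Defensive.

Local Open Scope fset_scope.

(* A tree (a graph with a root source r) is represented by its root:    *)
(* the list of labels of the unary edges at the root and the list of    *)
(* outgoing binary edges (label, subtree).  Trees are graphs taken up   *)
(* to isomorphism; isomorphism of such rooted trees is [tiso] below     *)
(* (permutation of unary edges and of children, recursively).           *)

Inductive rtree (U Bi : Type) : Type :=
  TNode : seq U -> seq (Bi * rtree U Bi) -> rtree U Bi.

Inductive tiso (U Bi : Type) : rtree U Bi -> rtree U Bi -> Prop :=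
  | tisoN (us us' : seq U) (ch ch' : seq (Bi * rtree U Bi)) :
      Permutation us us' ->
      (exists ch'', Permutation ch' ch'' /\
         List.Forall2 (fun p q => p.1 = q.1 /\ tiso p.2 q.2) ch ch'') ->
      tiso (TNode us ch) (TNode us' ch').

(* The tree graphs that are values of ground terms over c, append_b and ||:
   every node carries at least one (unary or outgoing binary) edge. *)
Inductive wf (U Bi : Type) : rtree U Bi -> Prop :=
  | wfN (us : seq U) (ch : seq (Bi * rtree U Bi)) :
      (us <> [::] \/ ch <> [::]) ->
      (forall p, List.In p ch -> wf p.2) ->
      wf (TNode us ch).

Definition ptree (U Bi : Type) := {t : rtree U Bi | wf t}.

Definition tree_eq (U Bi : Type) (t t' : ptree U Bi) : Prop :=
  tiso (proj1_sig t) (proj1_sig t').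

Definition leaf_r (U Bi : Type) (c : U) : rtree U Bi := TNode [:: c] [::].
Definition append_r (U Bi : Type) (b : Bi) (t : rtree U Bi) : rtree U Bi :=
  TNode [::] [:: (b, t)].
Definition par_r (U Bi : Type) (t1 t2 : rtree U Bi) : rtree U Bi :=
  match t1, t2 with TNode u1 c1, TNode u2 c2 => TNode (u1 ++ u2) (c1 ++ c2) end.

Lemma wf_leaf (U Bi : Type) (c : U) : wf (leaf_r Bi c).
Proof. constructor; first by left. by []. Qed.

Lemma wf_append (U Bi : Type) (b : Bi) (t : rtree U Bi) : wf t -> wf (append_r b t).
Proof. move=> Ht; constructor; first by right. by move=> p [<-|[]]. Qed.

Lemma wf_par (U Bi : Type) (t1 t2 : rtree U Bi) : wf t1 -> wf t2 -> wf (par_r t1 t2).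
Proof.
case=> u1 c1 H1 W1; case=> u2 c2 H2 W2; constructor.
  case: H1 => H; [left|right]; [by case: u1 H | by case: c1 H {W1}].
move=> p Hp; case: (List.in_app_or _ _ _ Hp) => H; [exact: W1|exact: W2].
Qed.

Definition tleaf (U Bi : Type) (c : U) : ptree U Bi := exist _ _ (wf_leaf Bi c).
Definition tappend (U Bi : Type) (b : Bi) (t : ptree U Bi) : ptree U Bi :=
  exist _ _ (wf_append b (proj2_sig t)).
Definition tpar (U Bi : Type) (t1 t2 : ptree U Bi) : ptree U Bi :=
  exist _ _ (wf_par (proj2_sig t1) (proj2_sig t2)).

Record alg (C Un : Type) := Alg {
  car : Type;
  car_eq : car -> car -> Prop;   (* equality of the universe (quotient) *)
  acst : C -> car;
  aun : Un -> car -> car;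
  abin : car -> car -> car }.

Definition recognizable (C Un : Type) (X : alg C Un) (K : car X -> Prop) : Prop :=
  exists (F : finType) (cF : C -> F) (uF : Un -> F -> F) (bF : F -> F -> F)
         (h : car X -> F) (Cs : F -> Prop),
    (forall x y, car_eq x y -> h x = h y) /\
    (forall c, h (acst X c) = cF c) /\
    (forall u x, h (aun u x) = uF u (h x)) /\
    (forall x y, h (abin x y) = bF (h x) (h y)) /\
    (forall x, K x <-> Cs (h x)).

Arguments recognizable {C Un} X K.

Definition tree_alg (U Bi : Type) : alg U Bi :=
  @Alg U Bi (ptree U Bi) (@tree_eq U Bi) (@tleaf U Bi) (@tappend U Bi) (@tpar U Bi).

Definition fsperm (S : Type) :=
  {alpha : S -> S | bijective alpha /\
     exists supp : seq S, forall x, ~ List.In x supp -> alpha x = x}.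

(* HR constants: 0_sigma, and a_(s1,...,sk) with distinct sources *)
Inductive hr_const (S : choiceType) (A : Type) : Type :=
  | HZero of {fset S}
  | HAtom of A & {s : seq S | uniq s}.

(* HR unary operations: restrict_sigma and rename_alpha
   (the binary operation is parallel composition ||) *)
Inductive hr_unop (S : choiceType) : Type :=
  | HRestrict of {fset S}
  | HRename of fsperm S.

(* B_parse: one unary label per HR constant, one binary label per
   unary HR operation *)
Inductive parse_unary (S : choiceType) (A : Type) : Type :=
  | ul_const of hr_const S A.
Inductive parse_binary (S : choiceType) : Type :=
  | ul_unop of hr_unop S.

Definition parse_tree (S : choiceType) (A : Type) :=
  ptree (parse_unary S A) (parse_binary S).

Definition T_parse (S : choiceType) (A : Type) :
  alg (parse_unary S A) (parse_binary S) :=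
  tree_alg (parse_unary S A) (parse_binary S).

Definition P_alg (S : choiceType) (A : Type) : alg (hr_const S A) (hr_unop S) :=
  @Alg (hr_const S A) (hr_unop S) (parse_tree S A)
       (@tree_eq (parse_unary S A) (parse_binary S))
       (fun c => tleaf (parse_binary S) (ul_const c))
       (fun u t => tappend (ul_unop u) t)
       (@tpar (parse_unary S A) (parse_binary S)).

(* Main.v *)
Require Import Defs.
From mathcomp Require Import all_boot.

Theorem lemma5p3 (S : countType) (HS : exists f : nat -> S, injective f)
  (A : Type) (K : parse_tree S A -> Prop)
  (HK : forall t t', tree_eq t t' -> (K t <-> K t')) :
  recognizable (T_parse S A) K <-> recognizable (P_alg S A) K.
Proof.
split.
- move=> [F [cF [uF [bF [h [Cs [H1 [H2 [H3 [H4 H5]]]]]]]]]].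
  exists F, (fun c => cF (@ul_const S A c)), (fun u => uF (ul_unop u)), bF, h, Cs.
  split; first exact: H1.
  split; first by move=> c; exact: (H2 (@ul_const S A c)).
  split; first by move=> u x; exact: (H3 (ul_unop u) x).
  by split.
- move=> [F [cF [uF [bF [h [Cs [H1 [H2 [H3 [H4 H5]]]]]]]]]].
  exists F, (fun p => match p with ul_const c => cF c end),
    (fun p => match p with ul_unop u => uF u end), bF, h, Cs.
  split; first exact: H1.
  split; first by case=> c; exact: (H2 c).
  split; first by case=> u x; exact: (H3 u x).
  by split.
Qed.
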